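(* Let $b=1/2$, let $\mathcal B$ be a Hamel basis of $\mathbb{R}$ over $\mathbb{Q}$ with $b\in\mathcal B$, and let $\pi:\mathbb{R}\to[0,1]$ be defined by $\pi(x)=\lambda^x_b-\lfloor\lambda^x_b\rfloor$ if $\lambda^x_b$ is not an odd integer, and $\pi(x)=1$ if $\lambda^x_b$ is an odd integer. Suppose $\pi_1,\pi_2:\mathbb{R}\to\mathbb{R}_+$ are minimal valid functions for $I_b$ with $\pi=\tfrac12\pi_1+\tfrac12\pi_2$. Then $\pi_i(x)=\pi_i(\lambda^x_b\, b)$ for every $x\in\mathbb{R}$ and $i=1,2$.
   Context: For $b\in\mathbb{R}\setminus\mathbb{Z}$, $I_b$ is the set of finite-support functions $y:\mathbb{R}\to\mathbb{Z}_+$ (i.e. $y(x)=0$ for all but finitely many $x$) such that $\sum_{x\in\mathbb{R}} y(x)\,x\equiv b \pmod 1$. A function $\pi:\mathbb{R}\to\mathbb{R}_+$ is a (nonnegative) valid function for $I_b$ if $\sum_{x\in\mathbb{R}}\pi(x)y(x)\ge 1$ for every $y\in I_b$. A valid function $\pi:\mathbb{R}\to\mathbb{R}_+$ is minimal if there is no valid function $\pi':\mathbb{R}\to\mathbb{R}_+$ with $\pi'\ne\pi$ and $\pi'\le\pi$ pointwise; equivalently (Gomory–Johnson), $\pi\ge0$ is subadditive ($\pi(x)+\pi(y)\ge\pi(x+y)$ for all $x,y$), symmetric ($\pi(x)+\pi(b-x)=1$ for all $x$) and $\pi(z)=0$ for all $z\in\mathbb{Z}$. A Hamel basis is a basis of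 $\mathbb{R}$ as a vector space over $\mathbb{Q}$; for $x\in\mathbb{R}$, $\lambda^x_b\in\mathbb{Q}$ denotes the coefficient of the basis element $b$ in the unique expression of $x$ as a finite rational linear combination of elements of $\mathcal B$. *)

(* Defs.v *)
From Stdlib Require Import Reals Lra QArith Qreals List ClassicalEpsilon.
Open Scope R_scope.

Definition lincomb (l : list (Q * R)) : R :=
  fold_right (fun p acc => Q2R (fst p) * snd p + acc) 0 l.

Definition hamel_basis (B : R -> Prop) : Prop :=
  (forall l : list (Q * R),
      NoDup (map snd l) -> Forall (fun p => B (snd p)) l ->
      lincomb l = 0 -> Forall (fun p => Q2R (fst p) = 0) l) /\
  (forall x : R, exists l : list (Q * R),
      NoDup (map snd l) /\ Forall (fun p => B (snd p)) l /\ x = lincomb l).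

(* [hamel_coeff B b x q]: q is the coefficient of the basis element b in
   the (unique) expansion of x in the basis B, i.e. q = lambda^x_b. *)
Definition hamel_coeff (B : R -> Prop) (b x : R) (q : Q) : Prop :=
  exists l : list (Q * R),
    NoDup (map snd l) /\ Forall (fun p => B (snd p)) l /\ x = lincomb l /\
    ((exists q', In (q', b) l /\ Q2R q' = Q2R q) \/
     (~ In b (map snd l) /\ Q2R q = 0)).

Definition sum_list (f : R -> R) (l : list R) : R :=
  fold_right (fun x acc => f x + acc) 0 l.

(* y : R -> Z_+ with finite support (witnessed by a duplicate-free list l
   containing the support), and sum_x y(x) x = b (mod 1).  Then
   sum_x pi(x) y(x) is computed over l. *)
Definition valid_fun (b : R) (pi : R -> R) : Prop :=
  (forall x, 0 <= pi x) /\
  forall (y : R -> nat) (l : list R),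
    NoDup l -> (forall x, y x <> 0%nat -> In x l) ->
    (exists k : Z, sum_list (fun x => INR (y x) * x) l = b + IZR k) ->
    sum_list (fun x => pi x * INR (y x)) l >= 1.

Definition minimal_valid (b : R) (pi : R -> R) : Prop :=
  valid_fun b pi /\
  ~ (exists pi' : R -> R, valid_fun b pi' /\ (forall x, pi' x <= pi x) /\
                          exists x, pi' x <> pi x).

Definition odd_integer (r : R) : Prop := exists k : Z, r = IZR (2 * k + 1).

(* floor via Int_part (Int_part r = up r - 1 = floor r). *)
Definition frac (r : R) : R := r - IZR (Int_part r).

Definition pi_lam (lam : R -> Q) (x : R) : R :=
  if excluded_middle_informative (odd_integer (Q2R (lam x))) then 1
  else frac (Q2R (lam x)).

(* Main.v *)
Require Import Defs.
From Stdlib Require Import Reals QArith Qreals List Lra Lia ClassicalEpsilon.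
Open Scope R_scope.


Lemma sum_ext f g l : (forall t, f t = g t) -> sum_list f l = sum_list g l.
Proof. intro H; induction l; simpl; [reflexivity| rewrite H, IHl; reflexivity]. Qed.

Lemma sum_plus f g l : sum_list (fun t => f t + g t) l = sum_list f l + sum_list g l.
Proof. induction l; simpl; [lra| rewrite IHl; lra]. Qed.

Lemma sum_zero f l : (forall t, In t l -> f t = 0) -> sum_list f l = 0.
Proof. induction l; simpl; intros H; [reflexivity|].
  rewrite H by auto. rewrite IHl by auto. lra. Qed.

Lemma sum_delta (h : R -> R) a l : NoDup l -> In a l ->
  sum_list (fun t => if Req_EM_T t a then h t else 0) l = h a.
Proof.
  induction l as [|c u IH]; simpl; intros Hn Hi; [contradiction|].
  apply NoDup_cons_iff in Hn as [Hc Hu].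
  destruct (Req_EM_T c a) as [e|e].
  - subst. rewrite sum_zero; [lra|]. intros t Ht.
    destruct (Req_EM_T t _); [subst; contradiction|reflexivity].
  - destruct Hi as [Hi|Hi]; [congruence|]. rewrite IH; auto; lra.
Qed.

Lemma nodup_remove (a : R) l : NoDup l -> NoDup (remove Req_EM_T a l).
Proof.
  induction l as [|c u IH]; simpl; intros Hn; [constructor|].
  apply NoDup_cons_iff in Hn as [Hc Hu].
  destruct (Req_EM_T a c); auto. constructor; auto.
  intro H; apply in_remove in H; tauto.
Qed.

Lemma sum_remove f (a : R) l : NoDup l -> In a l ->
  sum_list f l = f a + sum_list f (remove Req_EM_T a l).
Proof.
  induction l as [|c u IH]; simpl; intros Hn Hi; [contradiction|].
  apply NoDup_cons_iff in Hn as [Hc Hu].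
  destruct (Req_EM_T a c) as [e|e].
  - subst. rewrite notin_remove by auto. reflexivity.
  - destruct Hi as [Hi|Hi]; [congruence|]. simpl. rewrite IH; auto; lra.
Qed.

Lemma sum_equiv f l1 : forall l2, NoDup l1 -> NoDup l2 ->
  (forall t, f t <> 0 -> (In t l1 <-> In t l2)) -> sum_list f l1 = sum_list f l2.
Proof.
  induction l1 as [|a t1 IH]; intros l2 H1 H2 H.
  - simpl. symmetry. apply sum_zero. intros t Ht.
    destruct (Req_EM_T (f t) 0); auto. apply H in n. simpl in n. tauto.
  - apply NoDup_cons_iff in H1 as [Ha Ht1]. simpl.
    destruct (Req_EM_T (f a) 0) as [e|e].
    + rewrite e, (IH l2); auto; [lra|].
      intros t Hf. rewrite <- (H t Hf). simpl.
      split; [tauto|]. intros [E|E]; [subst; contradiction|auto].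
    + assert (Hin : In a l2) by (apply (H a e); simpl; auto).
      rewrite (sum_remove f a l2) by auto.
      rewrite (IH (remove Req_EM_T a l2)); auto; [apply nodup_remove; auto|].
      intros t Hf. split.
      * intro Hi. apply in_in_remove. intro; subst; contradiction.
        apply (H t Hf); simpl; auto.
      * intro Hi. apply in_remove in Hi as [Hi Hne].
        apply (H t Hf) in Hi. simpl in Hi. destruct Hi; [congruence|auto].
Qed.

Lemma minM (p : R -> R) b : minimal_valid b p -> forall z, p (-z) = 0 ->
  forall x, p x <= p (x + z).
Proof.
  intros [[Hnn Hv] Hmin] z Hz x.
  destruct (Rle_lt_dec (p x) (p (x+z))) as [|Hlt]; auto. exfalso. apply Hmin.
  exists (fun t => if Req_EM_T t x then p (x+z) else p t). split; [|split].
  - split. { intro t; destruct (Req_EM_T t x); auto. }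
    intros y l Hnd Hsup [kz Hk].
    set (y' := fun t => ((if Req_EM_T t x then 0 else y t) + (if Req_EM_T t (x+z) then y x else 0) + (if Req_EM_T t (-z) then y x else 0))%nat).
    set (L := nodup Req_EM_T (x :: (x+z) :: (-z) :: l)).
    assert (HL : NoDup L) by apply NoDup_nodup.
    assert (HiL : forall t, In t L <-> In t (x :: (x+z) :: (-z) :: l)) by (intro; apply nodup_In).
    assert (Hx : In x L) by (apply HiL; simpl; auto).
    assert (Hxz : In (x+z) L) by (apply HiL; simpl; auto).
    assert (Hmz : In (-z) L) by (apply HiL; simpl; auto).
    assert (Eq1 : forall f, (forall t, f t <> 0 -> y t <> 0%nat) -> sum_list f l = sum_list f L).
    { intros f Hf. apply sum_equiv; auto. intros t Ht. split.
      - intro; apply HiL; simpl; auto.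
      - intro; apply Hsup, Hf, Ht. }
    assert (A : sum_list (fun t => INR (y' t) * t) L = sum_list (fun t => INR (y t) * t) L
       + (-(INR (y x) * x)) + INR (y x) * (x+z) + INR (y x) * (-z)).
    { rewrite (sum_ext _ (fun t => INR (y t) * t + ((if Req_EM_T t x then -(INR (y t) * t) else 0)
          + ((if Req_EM_T t (x+z) then INR (y x) * t else 0) + (if Req_EM_T t (-z) then INR (y x) * t else 0))))).
      - rewrite !sum_plus, !sum_delta by auto. lra.
      - intro t. unfold y'. destruct (Req_EM_T t x), (Req_EM_T t (x+z)), (Req_EM_T t (-z));
          rewrite ?plus_INR; simpl INR; ring. }
    assert (Hs' : exists k : Z, sum_list (fun t => INR (y' t) * t) L = b + IZR k).
    { exists kz. rewrite A, <- Eq1, Hk. ring.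
      intros t Ht E. apply Ht. rewrite E. simpl. ring. }
    assert (Hsup' : forall t, y' t <> 0%nat -> In t L).
    { intros t Ht. apply HiL. unfold y' in Ht.
      destruct (Req_EM_T t x), (Req_EM_T t (x+z)), (Req_EM_T t (-z)); subst; simpl; auto;
      right; right; right; apply Hsup; intro E; apply Ht; rewrite E; reflexivity. }
    pose proof (Hv y' L HL Hsup' Hs') as Hge.
    assert (C : sum_list (fun t => p t * INR (y' t)) L = sum_list (fun t => p t * INR (y t)) L
       + (-(p x * INR (y x))) + p (x+z) * INR (y x) + p (-z) * INR (y x)).
    { rewrite (sum_ext _ (fun t => p t * INR (y t) + ((if Req_EM_T t x then -(p t * INR (y t)) else 0)
          + ((if Req_EM_T t (x+z) then p t * INR (y x) else 0) + (if Req_EM_T t (-z) then p t * INR (y x) else 0))))).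
      - rewrite !sum_plus, !sum_delta by auto. lra.
      - intro t. unfold y'. destruct (Req_EM_T t x), (Req_EM_T t (x+z)), (Req_EM_T t (-z));
          rewrite ?plus_INR; simpl INR; ring. }
    rewrite Eq1.
    2:{ intros t Ht E. apply Ht. rewrite E. simpl. ring. }
    rewrite (sum_ext _ (fun t => p t * INR (y t) + (if Req_EM_T t x then (p (x+z) - p t) * INR (y t) else 0))).
    + rewrite sum_plus, sum_delta by auto. rewrite Hz in C. lra.
    + intro t. destruct (Req_EM_T t x); ring.
  - intro t. destruct (Req_EM_T t x); [subst; lra | lra].
  - exists x. destruct (Req_EM_T x x); [lra|congruence].
Qed.

Definition coefR (b : R) (l : list (Q * R)) : R :=
  fold_right (fun p acc => (if Req_EM_T (snd p) b then Q2R (fst p) else 0) + acc) 0 l.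

Definition upd (q : Q) (v : R) (l : list (Q * R)) :=
  map (fun p => if Req_EM_T (snd p) v then (Qplus (fst p) q, snd p) else p) l.

Lemma upd_snd q v l : map snd (upd q v l) = map snd l.
Proof. induction l as [|[a c] u IH]; simpl; auto. destruct (Req_EM_T c v); simpl; f_equal; auto. Qed.

Lemma upd_notin q v l : ~ In v (map snd l) -> upd q v l = l.
Proof. induction l as [|[a c] u IH]; simpl; intros H; auto.
  destruct (Req_EM_T c v); [subst; tauto|]. f_equal; auto. Qed.

Lemma upd_in b q v l : NoDup (map snd l) -> In v (map snd l) ->
  lincomb (upd q v l) = lincomb l + Q2R q * v /\
  coefR b (upd q v l) = coefR b l + (if Req_EM_T v b then Q2R q else 0).
Proof.
  induction l as [|[a c] u IH]; simpl; intros Hn Hi; [contradiction|].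
  apply NoDup_cons_iff in Hn as [Hc Hu].
  destruct (Req_EM_T c v) as [e|e].
  - subst. rewrite upd_notin by auto. simpl. rewrite Q2R_plus.
    destruct (Req_EM_T v b); split; ring.
  - destruct Hi as [Hi|Hi]; [congruence|]. destruct (IH Hu Hi) as [E1 E2].
    unfold upd. simpl. fold (upd q v u). rewrite E1, E2. split; ring.
Qed.

Lemma normalize b (B : R -> Prop) l : Forall (fun p => B (snd p)) l ->
  exists l', NoDup (map snd l') /\ Forall (fun p => B (snd p)) l' /\
    lincomb l' = lincomb l /\ coefR b l' = coefR b l.
Proof.
  induction l as [|[q v] u IH]; intros HF.
  - exists nil. repeat split; constructor.
  - inversion HF as [|? ? Hv Hu]; subst. destruct (IH Hu) as (l' & N & F & E1 & E2).
    destruct (in_dec Req_EM_T v (map snd l')) as [Hi|Hi].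
    + exists (upd q v l'). destruct (upd_in b q v l' N Hi) as [U1 U2].
      split; [rewrite upd_snd; auto|]. split.
      * unfold upd. apply Forall_map. eapply Forall_impl; [|exact F].
        intros [a c] H; simpl. destruct (Req_EM_T c v); auto.
      * simpl. rewrite U1, U2, E1, E2. split; ring.
    + exists ((q, v) :: l'). simpl. split; [constructor; auto|].
      split; [constructor; auto|]. rewrite E1, E2. split; reflexivity.
Qed.

Lemma zero_coef B b l : hamel_basis B -> Forall (fun p => B (snd p)) l ->
  lincomb l = 0 -> coefR b l = 0.
Proof.
  intros [Hind _] HF H0. destruct (normalize b B l HF) as (l' & N & F & E1 & E2).
  rewrite <- E2. rewrite <- E1 in H0. pose proof (Hind l' N F H0) as Z.
  clear - Z. induction Z as [|[a c] u Ha Hu IH]; simpl in *; auto.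
  rewrite IH. destruct (Req_EM_T c b); lra.
Qed.

Definition negl (l : list (Q * R)) := map (fun p => (Qopp (fst p), snd p)) l.

Lemma lincomb_app l1 l2 : lincomb (l1 ++ l2) = lincomb l1 + lincomb l2.
Proof. induction l1; simpl; [ring|]. unfold lincomb in *. simpl. rewrite IHl1; ring. Qed.
Lemma coefR_app b l1 l2 : coefR b (l1 ++ l2) = coefR b l1 + coefR b l2.
Proof. induction l1; simpl; [ring|]. unfold coefR in *. simpl. rewrite IHl1; ring. Qed.
Lemma lincomb_neg l : lincomb (negl l) = - lincomb l.
Proof. induction l; simpl; [ring|]. unfold lincomb in *; simpl in *. rewrite IHl, Q2R_opp; ring. Qed.
Lemma coefR_neg b l : coefR b (negl l) = - coefR b l.
Proof. induction l; simpl; [ring|]. unfold coefR in *; simpl in *. rewrite IHl, Q2R_opp.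
  destruct (Req_EM_T (snd a) b); ring. Qed.
Lemma Forall_neg (B : R -> Prop) l : Forall (fun p => B (snd p)) l -> Forall (fun p => B (snd p)) (negl l).
Proof. intro H. unfold negl. apply Forall_map. eapply Forall_impl; [|exact H]. simpl; auto. Qed.

Lemma uniq B b l1 l2 : hamel_basis B -> Forall (fun p => B (snd p)) l1 -> Forall (fun p => B (snd p)) l2 ->
  lincomb l1 = lincomb l2 -> coefR b l1 = coefR b l2.
Proof.
  intros HB F1 F2 E. assert (Z : coefR b (l1 ++ negl l2) = 0).
  { apply (zero_coef B); auto. apply Forall_app; split; auto. apply Forall_neg; auto.
    rewrite lincomb_app, lincomb_neg. lra. }
  rewrite coefR_app, coefR_neg in Z. lra.
Qed.

Lemma coef_nodup b l q : NoDup (map snd l) ->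
  ((exists q', In (q', b) l /\ Q2R q' = Q2R q) \/ (~ In b (map snd l) /\ Q2R q = 0)) ->
  coefR b l = Q2R q.
Proof.
  intros N [[q' [Hi Hq]]|[Hn Hq]].
  - rewrite <- Hq. clear Hq. induction l as [|[a c] u IH]; simpl in *; [contradiction|].
    apply NoDup_cons_iff in N as [Hc Hu].
    destruct Hi as [E|Hi].
    + inversion E; subst. destruct (Req_EM_T b b); [|congruence].
      assert (coefR b u = 0). { clear -Hc. induction u as [|[a c] u IH]; simpl in *; auto.
        destruct (Req_EM_T c b); [subst; tauto|]. rewrite IH; auto; ring. }
      rewrite H; ring.
    + destruct (Req_EM_T c b); [subst; exfalso; apply Hc; apply (in_map snd) in Hi; exact Hi|].
      rewrite IH; auto; ring.
  - rewrite Hq. clear -Hn. induction l as [|[a c] u IH]; simpl in *; auto.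
    destruct (Req_EM_T c b); [subst; tauto|]. rewrite IH; auto; ring.
Qed.

Lemma key B b lam : hamel_basis B -> (forall x, hamel_coeff B b x (lam x)) ->
  forall l, Forall (fun p => B (snd p)) l -> Q2R (lam (lincomb l)) = coefR b l.
Proof.
  intros HB Hl l F. destruct (Hl (lincomb l)) as (l2 & N & F2 & E & C).
  rewrite <- (coef_nodup b l2 _ N C). apply (uniq B); auto.
Qed.

Lemma pi_lam0 lam t : Q2R (lam t) = 0 -> pi_lam lam t = 0.
Proof.
  intro H. unfold pi_lam. rewrite H.
  destruct (excluded_middle_informative (odd_integer 0)) as [[k Hk]|_].
  - apply eq_IZR in Hk. lia.
  - unfold frac. destruct (base_Int_part 0) as [H1 H2].
    assert (Int_part 0 = 0%Z).
    { apply le_IZR in H1. assert (IZR (Int_part 0) > -1) by lra.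
      apply lt_IZR in H0. lia. }
    rewrite H0. simpl. ring.
Qed.

Theorem mainTheorem2
  (B : R -> Prop) (hB : hamel_basis B) (hb : B (1/2))
  (lam : R -> Q) (hlam : forall x, hamel_coeff B (1/2) x (lam x))
  (pi1 pi2 : R -> R)
  (h1 : minimal_valid (1/2) pi1) (h2 : minimal_valid (1/2) pi2)
  (hpi : forall x, pi_lam lam x = 1/2 * pi1 x + 1/2 * pi2 x) :
  forall x, pi1 x = pi1 (Q2R (lam x) * (1/2)) /\
            pi2 x = pi2 (Q2R (lam x) * (1/2)).
Proof.
  intro x. destruct (hlam x) as (lx & N & F & Ex & C).
  pose proof (coef_nodup _ _ _ N C) as Cx.
  set (w := x - Q2R (lam x) * (1/2)).
  set (lw := lx ++ (Qopp (lam x), 1/2) :: nil).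
  assert (Fw : Forall (fun p => B (snd p)) lw).
  { apply Forall_app; split; auto. }
  assert (Ew : lincomb lw = w).
  { unfold lw, w. rewrite lincomb_app, <- Ex. simpl. rewrite Q2R_opp. ring. }
  assert (Cw : coefR (1/2) lw = 0).
  { unfold lw. rewrite coefR_app, Cx. simpl. rewrite Q2R_opp.
    destruct (Req_EM_T (1/2) (1/2)); [ring|congruence]. }
  assert (Lw : Q2R (lam w) = 0).
  { rewrite <- Ew, (key B (1/2) lam hB hlam lw Fw). exact Cw. }
  assert (Lmw : Q2R (lam (-w)) = 0).
  { rewrite <- Ew, <- lincomb_neg, (key B (1/2) lam hB hlam (negl lw) (Forall_neg _ _ Fw)).
    rewrite coefR_neg, Cw. ring. }
  pose proof (hpi w) as Pw. pose proof (hpi (-w)) as Pmw.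
  rewrite pi_lam0 in Pw by exact Lw. rewrite pi_lam0 in Pmw by exact Lmw.
  pose proof (proj1 (proj1 h1)) as n1. pose proof (proj1 (proj1 h2)) as n2.
  pose proof (n1 w). pose proof (n2 w). pose proof (n1 (-w)). pose proof (n2 (-w)).
  assert (p1w : pi1 w = 0) by lra. assert (p2w : pi2 w = 0) by lra.
  assert (p1mw : pi1 (-w) = 0) by lra. assert (p2mw : pi2 (-w) = 0) by lra.
  assert (Ex0 : Q2R (lam x) * (1/2) + w = x) by (unfold w; ring).
  assert (Ex1 : x + - w = Q2R (lam x) * (1/2)) by (unfold w; ring).
  pose proof (minM pi1 _ h1 w p1mw (Q2R (lam x) * (1/2))) as A1.
  pose proof (minM pi2 _ h2 w p2mw (Q2R (lam x) * (1/2))) as A2.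
  rewrite <- (Ropp_involutive w) in p1w, p2w.
  pose proof (minM pi1 _ h1 (-w) p1w x) as B1.
  pose proof (minM pi2 _ h2 (-w) p2w x) as B2.
  rewrite Ex0 in A1, A2. rewrite Ex1 in B1, B2. split; lra.
Qed.
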